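(* Let $A\in\mathbb{R}^{m\times n}$ with $m<n$, let $B$ be a matrix whose columns form a basis of the null space of $A$, let $p\in(0,1)$, let $T\subseteq\{1,\dots,n\}$ be a fixed support and let $\sigma\in\{-1,+1\}^T$ be a fixed sign pattern. Then every $\mathbf{x}\in\mathbb{R}^n$ with support exactly $T$ and $\operatorname{sgn}(x_i)=\sigma_i$ for all $i\in T$ is the unique solution of the $\ell_p$-minimization problem $\min\{\|\mathbf{v}\|_p^p : A\mathbf{v}=A\mathbf{x}\}$ if and only if the following holds for every nonzero vector $\mathbf{z}$ (of dimension equal to the number of columns of $B$): with $T^-=\{i\in T:(B\mathbf{z})_i\sigma_i<0\}$ and $T^+=\{i\in T:(B\mathbf{z})_i\sigma_i\ge 0\}$, $$\|B_{T^-}\mathbf{z}\|_p^p\le \|B_{T^c}\mathbf{z}\|_p^p,$$ and moreover, if $B_{T^+}\mathbf{z}=\mathbf{0}$, then $\|B_{T^-}\mathbf{z}\|_p^p< \|B_{T^c}\mathbf{z}\|_p^p$.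
   Context: For $p>0$, $\|\mathbf{v}\|_p^p=\sum_i|v_i|^p$. For an index set $S$, $B_S$ denotes the submatrix of $B$ consisting of the rows indexed by $S$; $T^c=\{1,\dots,n\}\setminus T$. The support of $\mathbf{x}$ is $\{i: x_i\neq 0\}$. *)

(* Defs.v *)
From Stdlib Require Import Reals.
Open Scope R_scope.

(* Vectors in R^d are functions nat -> R; only indices 0..d-1 matter
   (0-based indexing of {1,...,d}). Matrices are nat -> nat -> R. *)

Fixpoint fsum (d : nat) (f : nat -> R) : R :=
  match d with
  | O => 0
  | S d' => fsum d' f + f d'
  end.

Definition matvec (M : nat -> nat -> R) (d : nat) (v : nat -> R) (i : nat) : R :=
  fsum d (fun j => M i j * v j).

(* a^p with the convention 0^p = 0 (p > 0) *)
Definition rpow (a p : R) : R := if Req_EM_T a 0 then 0 else Rpower a p.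

Definition Rltb (a b : R) : bool := if Rlt_dec a b then true else false.

(* sum_{i < d, sel i} |w_i|^p  = || w_S ||_p^p with S = {i : sel i} *)
Definition lpp (p : R) (d : nat) (sel : nat -> bool) (w : nat -> R) : R :=
  fsum d (fun i => if sel i then rpow (Rabs (w i)) p else 0).

Definition sgn (a : R) : R :=
  if Rlt_dec 0 a then 1 else if Rlt_dec a 0 then -1 else 0.

Definition null_basis (A : nat -> nat -> R) (m n : nat) (B : nat -> nat -> R) (k : nat) : Prop :=
  (forall j, (j < k)%nat -> forall i, (i < m)%nat -> matvec A n (fun l => B l j) i = 0)
  /\ (forall z : nat -> R,
        (forall i, (i < n)%nat -> matvec B k z i = 0) -> forall j, (j < k)%nat -> z j = 0)
  /\ (forall v : nat -> R,
        (forall i, (i < m)%nat -> matvec A n v i = 0) ->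
        exists z : nat -> R, forall i, (i < n)%nat -> v i = matvec B k z i).

Definition unique_lp_solution (A : nat -> nat -> R) (m n : nat) (p : R) (x : nat -> R) : Prop :=
  forall v : nat -> R,
    (forall i, (i < m)%nat -> matvec A n v i = matvec A n x i) ->
    (exists i, (i < n)%nat /\ v i <> x i) ->
    lpp p n (fun _ => true) x < lpp p n (fun _ => true) v.

(* Main.v *)
Require Import Defs.
From Stdlib Require Import Reals Lra Lia Classical.
Open Scope R_scope.

Lemma fsum_ext d f g : (forall i, (i<d)%nat -> f i = g i) -> fsum d f = fsum d g.
Proof. induction d; simpl; intros H; auto. rewrite IHd, (H d); auto; intros; apply H; lia. Qed.
Lemma fsum_plus d f g : fsum d (fun i => f i + g i) = fsum d f + fsum d g.
Proof. induction d; simpl; [lra| rewrite IHd; lra]. Qed.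
Lemma fsum_minus d f g : fsum d (fun i => f i - g i) = fsum d f - fsum d g.
Proof. induction d; simpl; [lra| rewrite IHd; lra]. Qed.
Lemma fsum_scal d c f : fsum d (fun i => c * f i) = c * fsum d f.
Proof. induction d; simpl; [lra| rewrite IHd; lra]. Qed.
Lemma fsum_zero d f : (forall i, (i<d)%nat -> f i = 0) -> fsum d f = 0.
Proof. induction d; simpl; intros H; auto. rewrite IHd, (H d); auto; try lra; intros; apply H; lia. Qed.
Lemma fsum_le d f g : (forall i, (i<d)%nat -> f i <= g i) -> fsum d f <= fsum d g.
Proof. induction d; simpl; intros H; [lra|]. assert (H1:=H d). assert (fsum d f <= fsum d g) by (apply IHd; intros; apply H; lia). specialize (H1 ltac:(lia)). lra. Qed.
Lemma fsum_lt d f g : (forall i, (i<d)%nat -> f i <= g i) -> (exists i, (i<d)%nat /\ f i < g i) -> fsum d f < fsum d g.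
Proof. induction d; simpl; intros H [i [Hi Hlt]]; [lia|].
  assert (H1:=H d). specialize (H1 ltac:(lia)).
  destruct (Nat.eq_dec i d) as [->|Hne].
  - assert (fsum d f <= fsum d g) by (apply fsum_le; intros; apply H; lia). lra.
  - assert (fsum d f < fsum d g) by (apply IHd; [intros; apply H; lia| exists i; split; [lia|auto]]). lra.
Qed.
Lemma fsum_const_le d f c : (forall i, (i<d)%nat -> f i <= c) -> fsum d f <= INR d * c.
Proof. induction d; intros H; simpl fsum; [simpl; lra|]; rewrite S_INR.
  assert (fsum d f <= INR d * c) by (apply IHd; intros; apply H; lia). specialize (H d ltac:(lia)). lra. Qed.
Lemma fsum_swap n k f : fsum n (fun l => fsum k (fun j => f l j)) = fsum k (fun j => fsum n (fun l => f l j)).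
Proof. induction n; simpl.
  - symmetry; apply fsum_zero; auto.
  - rewrite IHn, <- fsum_plus. reflexivity. Qed.

Lemma rpow_Rpower a p : 0 < a -> rpow a p = Rpower a p.
Proof. intros. unfold rpow. destruct (Req_EM_T a 0); [lra|auto]. Qed.
Lemma rpow_nonneg a p : 0 <= rpow a p.
Proof. unfold rpow. destruct (Req_EM_T a 0); [lra|]. unfold Rpower. left; apply exp_pos. Qed.
Lemma rpow_pos a p : 0 < a -> 0 < rpow a p.
Proof. intros. rewrite rpow_Rpower; auto. unfold Rpower; apply exp_pos. Qed.
Lemma rpow_0 p : rpow 0 p = 0.
Proof. unfold rpow. destruct (Req_EM_T 0 0); lra. Qed.
Lemma exp_le' x y : x <= y -> exp x <= exp y.
Proof. intros [H|H]; [left; apply exp_increasing; auto| subst; lra]. Qed.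
Lemma ln_le' x y : 0 < x -> x <= y -> ln x <= ln y.
Proof. intros Hx [H|H]; [left; apply ln_increasing; auto| subst; lra]. Qed.
Lemma rpow_lt a b p : 0 < p -> 0 <= a < b -> rpow a p < rpow b p.
Proof. intros Hp [[Ha|Ha] Hab].
  - rewrite !rpow_Rpower by lra. unfold Rpower. apply exp_increasing.
    apply Rmult_lt_compat_l; auto. apply ln_increasing; auto.
  - subst. rewrite rpow_0. apply rpow_pos; lra. Qed.
Lemma rpow_le a b p : 0 < p -> 0 <= a <= b -> rpow a p <= rpow b p.
Proof. intros Hp [Ha [Hab|Hab]]. left; apply rpow_lt; lra. subst; lra. Qed.
Lemma Rpower_neg_anti a b q : q < 0 -> 0 < a <= b -> Rpower b q <= Rpower a q.
Proof. intros. unfold Rpower. apply exp_le'.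
  assert (ln a <= ln b) by (apply ln_le'; lra). nra. Qed.
Lemma Rpower_split a p : 0 < a -> Rpower a p = a * Rpower a (p-1).
Proof. intros. replace p with (1 + (p-1)) at 1 by ring. rewrite Rpower_plus, Rpower_1; auto. Qed.
Lemma rpow_subadd a b p : 0<p<1 -> 0<=a -> 0<=b -> rpow (a+b) p <= rpow a p + rpow b p.
Proof. intros Hp [Ha|Ha] [Hb|Hb].
  - rewrite !rpow_Rpower by lra. rewrite (Rpower_split (a+b)), (Rpower_split a), (Rpower_split b) by lra.
    assert (Rpower (a+b) (p-1) <= Rpower a (p-1)) by (apply Rpower_neg_anti; lra).
    assert (Rpower (a+b) (p-1) <= Rpower b (p-1)) by (apply Rpower_neg_anti; lra).
    nra.
  - subst. rewrite Rplus_0_r, rpow_0. lra.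
  - subst. rewrite Rplus_0_l, rpow_0. lra.
  - subst. rewrite Rplus_0_l, rpow_0. lra. Qed.
Lemma rpow_abs_tri x w p : 0<p<1 -> rpow (Rabs x) p <= rpow (Rabs (x+w)) p + rpow (Rabs w) p.
Proof. intros Hp. eapply Rle_trans; [apply rpow_le with (b := Rabs (x+w) + Rabs w); [lra|]|].
  - split; [apply Rabs_pos|]. replace x with ((x+w) + (-w)) at 1 by ring.
    rewrite <- (Rabs_Ropp w). apply Rabs_triang.
  - apply rpow_subadd; auto; apply Rabs_pos. Qed.
Lemma rpow_tail C eps p : 0<p<1 -> 0<=C -> 0<eps -> exists M, 0<M /\ rpow (M+C) p - rpow M p < eps.
Proof. intros Hp HC He.
  set (L := ln ((C+1)/eps) / (1-p)). exists (exp L). split; [apply exp_pos|].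
  assert (HM := exp_pos L).
  rewrite !rpow_Rpower by lra.
  rewrite (Rpower_split (exp L + C)), (Rpower_split (exp L)) by lra.
  assert (Rpower (exp L + C) (p-1) <= Rpower (exp L) (p-1)) by (apply Rpower_neg_anti; lra).
  assert (Hq : Rpower (exp L) (p-1) = eps / (C+1)).
  { unfold Rpower. rewrite ln_exp. unfold L.
    replace ((p-1) * (ln ((C+1)/eps) / (1-p))) with (- ln ((C+1)/eps)) by (field; lra).
    rewrite <- ln_Rinv. rewrite exp_ln. field; lra.
    apply Rinv_0_lt_compat, Rdiv_lt_0_compat; lra. apply Rdiv_lt_0_compat; lra. }
  assert (Hpos : 0 < Rpower (exp L) (p-1)) by (unfold Rpower; apply exp_pos).
  assert ((exp L + C) * Rpower (exp L + C) (p - 1) - exp L * Rpower (exp L) (p - 1) <= C * Rpower (exp L) (p-1)) by nra.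
  rewrite Hq in H0 |- *. assert (C * (eps/(C+1)) < eps).
  { unfold Rdiv. apply Rmult_lt_reg_r with (C+1); [lra|].
    replace (C * (eps * / (C + 1)) * (C + 1)) with (C*eps) by (field; lra). nra. }
  lra.
Qed.

Lemma sgn_pos a : sgn a = 1 -> 0 < a.
Proof. unfold sgn; destruct (Rlt_dec 0 a); auto; destruct (Rlt_dec a 0); lra. Qed.
Lemma sgn_neg a : sgn a = -1 -> a < 0.
Proof. unfold sgn; destruct (Rlt_dec 0 a); [lra|]; destruct (Rlt_dec a 0); lra. Qed.
Lemma sgn_of_pos a : 0 < a -> sgn a = 1.
Proof. unfold sgn; destruct (Rlt_dec 0 a); lra. Qed.
Lemma sgn_of_neg a : a < 0 -> sgn a = -1.
Proof. unfold sgn; destruct (Rlt_dec 0 a); [lra|]; destruct (Rlt_dec a 0); lra. Qed.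

Lemma fsum_decomp n F G H K : fsum n F - fsum n G = (fsum n H - fsum n K) + fsum n (fun i => F i - G i - (H i - K i)).
Proof. rewrite !fsum_minus. ring. Qed.

Lemma bound_exists n (f : nat -> R) : exists C, 0 <= C /\ forall i, (i<n)%nat -> Rabs (f i) <= C.
Proof. induction n. exists 0; split; [lra|intros; lia].
  destruct IHn as [C [HC H]]. exists (Rmax C (Rabs (f n))). split.
  eapply Rle_trans; [apply HC| apply Rmax_l].
  intros i Hi. destruct (Nat.eq_dec i n) as [->|Hne]. apply Rmax_r.
  eapply Rle_trans; [apply H; lia| apply Rmax_l]. Qed.

Definition Dterm p xi wi (Ti : bool) si :=
  rpow (Rabs (xi+wi)) p - rpow (Rabs xi) p -
  ((if negb Ti then rpow (Rabs wi) p else 0) - (if andb Ti (Rltb (wi*si) 0) then rpow (Rabs wi) p else 0)).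

Lemma term_suff p xi wi Ti si : 0<p<1 -> (Ti = false -> xi = 0) ->
  (Ti = true -> sgn xi = si /\ (si = 1 \/ si = -1)) ->
  0 <= Dterm p xi wi Ti si /\ (andb Ti (negb (Rltb (wi*si) 0)) = true -> wi <> 0 -> 0 < Dterm p xi wi Ti si).
Proof. intros Hp H0 H1. unfold Dterm, Rltb. destruct Ti; simpl.
  - destruct (H1 eq_refl) as [Hs [Hsi|Hsi]]; subst si; destruct (Rlt_dec (wi * _) 0); simpl.
    + split; [|discriminate]. generalize (rpow_abs_tri xi wi p Hp). lra.
    + assert (0 < xi) by (apply sgn_pos; auto).
      assert (Hmono : forall b, 0 <= b -> 0 <= rpow (Rabs (xi+b)) p - rpow (Rabs xi) p /\ (b <> 0 -> 0 < rpow (Rabs (xi+b)) p - rpow (Rabs xi) p)).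
      { intros b Hb. rewrite !Rabs_right by lra. split.
        - assert (rpow xi p <= rpow (xi+b) p) by (apply rpow_le; nra). lra.
        - intros. assert (rpow xi p < rpow (xi+b) p) by (apply rpow_lt; lra). lra. }
      destruct (Hmono wi ltac:(nra)) as [A B]. split; [lra|intros _ Hw; specialize (B Hw); lra].
    + split; [|discriminate]. generalize (rpow_abs_tri xi wi p Hp). lra.
    + assert (xi < 0) by (apply sgn_neg; auto).
      rewrite (Rabs_left xi) by lra. rewrite Rabs_left1 by nra. split.
      * assert (rpow (-xi) p <= rpow (-(xi+wi)) p) by (apply rpow_le; nra). lra.
      * intros _ Hw. assert (rpow (-xi) p < rpow (-(xi+wi)) p) by (apply rpow_lt; nra). lra.
  - rewrite H0 by auto. rewrite Rplus_0_l, Rabs_R0, rpow_0. split; [lra|discriminate].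
Qed.

Definition xdef M wi (Ti : bool) si := if Ti then (if Rltb (wi*si) 0 then -wi else si*M) else 0.

Lemma term_nec p M C wi Ti si : 0<p<1 -> 0 < M -> Rabs wi <= C ->
  (Ti = true -> si = 1 \/ si = -1) ->
  Dterm p (xdef M wi Ti si) wi Ti si <= rpow (M+C) p - rpow M p
  /\ ((andb Ti (negb (Rltb (wi*si) 0)) = true -> wi = 0) -> Dterm p (xdef M wi Ti si) wi Ti si <= 0).
Proof. intros Hp HM HC Hs. assert (Hmc : rpow M p <= rpow (M+C) p) by (apply rpow_le; generalize (Rabs_pos wi); lra).
  unfold Dterm, xdef, Rltb. destruct Ti; simpl.
  - destruct (Rlt_dec (wi*si) 0); simpl.
    + replace (-wi+wi) with 0 by ring. rewrite Rabs_R0, rpow_0, Rabs_Ropp. lra.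
    + assert (HabsM : Rabs (si*M) = M) by (destruct (Hs eq_refl); subst si; [rewrite Rmult_1_l; apply Rabs_right; lra | rewrite Rabs_left; nra]).
      rewrite HabsM. split.
      * assert (rpow (Rabs (si*M+wi)) p <= rpow (M+C) p); [|lra].
        apply rpow_le; [lra|]. split; [apply Rabs_pos|]. eapply Rle_trans; [apply Rabs_triang|]. rewrite HabsM. lra.
      * intros Hw. rewrite Hw by auto. rewrite Rplus_0_r, HabsM. lra.
  - rewrite Rplus_0_l, Rabs_R0, rpow_0. lra.
Qed.

Lemma matvec_null (A B : nat -> nat -> R) m n k z : 
  (forall j, (j < k)%nat -> forall i, (i < m)%nat -> matvec A n (fun l => B l j) i = 0) ->
  forall i, (i<m)%nat -> matvec A n (matvec B k z) i = 0.
Proof. intros H i Hi. unfold matvec.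
  transitivity (fsum n (fun l => fsum k (fun j => A i l * B l j * z j))).
  { apply fsum_ext; intros. rewrite <- fsum_scal. apply fsum_ext; intros; ring. }
  rewrite fsum_swap. apply fsum_zero. intros j Hj.
  transitivity (z j * matvec A n (fun l => B l j) i).
  { unfold matvec. rewrite <- fsum_scal. apply fsum_ext; intros; ring. }
  rewrite H; auto; ring. Qed.

Lemma matvec_plus A n u w i : matvec A n (fun l => u l + w l) i = matvec A n u i + matvec A n w i.
Proof. unfold matvec. rewrite <- fsum_plus. apply fsum_ext; intros; ring. Qed.
Lemma matvec_minus A n u w i : matvec A n (fun l => u l - w l) i = matvec A n u i - matvec A n w i.
Proof. unfold matvec. rewrite <- fsum_minus. apply fsum_ext; intros; ring. Qed.

Theorem theorem3
  (m n k : nat) (A B : nat -> nat -> R) (p : R)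
  (T : nat -> bool) (sigma : nat -> R)
  (Hmn : (m < n)%nat)
  (HB : null_basis A m n B k)
  (Hp : 0 < p < 1)
  (HT : forall i, T i = true -> (i < n)%nat)
  (Hsigma : forall i, T i = true -> sigma i = 1 \/ sigma i = -1) :
  (forall x : nat -> R,
      (forall i, (i < n)%nat -> (x i <> 0 <-> T i = true)) ->
      (forall i, T i = true -> sgn (x i) = sigma i) ->
      unique_lp_solution A m n p x)
  <->
  (forall z : nat -> R,
      (exists j, (j < k)%nat /\ z j <> 0) ->
      let Bz := matvec B k z in
      let Tminus := fun i => andb (T i) (Rltb (Bz i * sigma i) 0) in
      let Tplus := fun i => andb (T i) (negb (Rltb (Bz i * sigma i) 0)) in
      let Tc := fun i => negb (T i) in
      lpp p n Tminus Bz <= lpp p n Tc Bz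
      /\ ((forall i, (i < n)%nat -> Tplus i = true -> Bz i = 0) ->
          lpp p n Tminus Bz < lpp p n Tc Bz)).
Proof.
  destruct HB as [HB1 [HB2 HB3]].
  split.
  - intros Hu z Hzn. cbv zeta.
    set (Bz := matvec B k z).
    assert (HAB := matvec_null A B m n k z HB1).
    assert (Hw0 : exists i0, (i0 < n)%nat /\ Bz i0 <> 0).
    { apply NNPP; intro Hno. destruct Hzn as [j [Hj Hzj]]. apply Hzj.
      apply (HB2 z); auto. intros i Hi. apply NNPP; intro Hne. apply Hno. exists i; auto. }
    set (S := lpp p n (fun i => negb (T i)) Bz - lpp p n (fun i => (T i && Rltb (Bz i * sigma i) 0)%bool) Bz).
    assert (Key : forall M, 0 < M -> 0 < S + fsum n (fun i => Dterm p (xdef M (Bz i) (T i) (sigma i)) (Bz i) (T i) (sigma i))).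
    { intros M HM. set (x := fun i => xdef M (Bz i) (T i) (sigma i)).
      assert (Hlt : lpp p n (fun _ => true) x < lpp p n (fun _ => true) (fun i => x i + Bz i)).
      { apply Hu.
        - intros i Hi. unfold x, xdef, Rltb. destruct (T i) eqn:ETi; split; intros; auto; try congruence.
          destruct (Rlt_dec (Bz i * sigma i) 0).
          + intro Hc. assert (Bz i = 0) by lra. rewrite H0 in r. lra.
          + destruct (Hsigma i ETi) as [-> | ->]; lra.
        - intros i Hi. unfold x, xdef, Rltb. rewrite Hi.
          destruct (Rlt_dec (Bz i * sigma i) 0).
          + destruct (Hsigma i Hi) as [E|E]; rewrite E in *; [apply sgn_of_pos | apply sgn_of_neg]; lra.
          + destruct (Hsigma i Hi) as [E|E]; rewrite E; [apply sgn_of_pos | apply sgn_of_neg]; lra.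
        - intros i Hi. rewrite matvec_plus. fold Bz. rewrite HAB; auto; ring.
        - destruct Hw0 as [i0 [Hi0 Hne]]. exists i0; split; auto. lra. }
      assert (E := fsum_decomp n (fun i => if true then rpow (Rabs (x i + Bz i)) p else 0)
                     (fun i => if true then rpow (Rabs (x i)) p else 0)
                     (fun i => if negb (T i) then rpow (Rabs (Bz i)) p else 0)
                     (fun i => if (T i && Rltb (Bz i * sigma i) 0)%bool then rpow (Rabs (Bz i)) p else 0)).
      unfold lpp in Hlt, S. fold S in E.
      assert (fsum n (fun i => (if true then rpow (Rabs (x i + Bz i)) p else 0) - (if true then rpow (Rabs (x i)) p else 0) -
                ((if negb (T i) then rpow (Rabs (Bz i)) p else 0) - (if (T i && Rltb (Bz i * sigma i) 0)%bool then rpow (Rabs (Bz i)) p else 0)))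
              = fsum n (fun i => Dterm p (xdef M (Bz i) (T i) (sigma i)) (Bz i) (T i) (sigma i))) as E2.
      { apply fsum_ext; intros; reflexivity. }
      cbv beta iota in E, E2; rewrite E2 in E. lra. }
    split.
    + apply Rnot_lt_le. intro Hneg. assert (HS : S < 0) by (unfold S; lra).
      destruct (bound_exists n Bz) as [C [HC HCb]].
      set (eps := - S / (INR n + 1)).
      assert (Hn := pos_INR n).
      assert (Heps : 0 < eps) by (unfold eps; apply Rdiv_lt_0_compat; lra).
      destruct (rpow_tail C eps p Hp HC Heps) as [M [HM HMe]].
      specialize (Key M HM).
      assert (fsum n (fun i => Dterm p (xdef M (Bz i) (T i) (sigma i)) (Bz i) (T i) (sigma i)) <= INR n * eps).
      { eapply Rle_trans; [apply fsum_const_le with (c := rpow (M+C) p - rpow M p)|].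
        - intros i Hi. apply term_nec; auto.
        - apply Rmult_le_compat_l; lra. }
      assert (S + INR n * eps = S / (INR n + 1)) by (unfold eps; field; lra).
      assert (S / (INR n + 1) < 0).
      { unfold Rdiv. apply Rmult_neg_pos; [lra|]. apply Rinv_0_lt_compat; lra. }
      lra.
    + intros Hplus. specialize (Key 1 Rlt_0_1).
      assert (fsum n (fun i => Dterm p (xdef 1 (Bz i) (T i) (sigma i)) (Bz i) (T i) (sigma i)) <= fsum n (fun _ => 0)).
      { apply fsum_le. intros i Hi.
        destruct (term_nec p 1 (Rabs (Bz i)) (Bz i) (T i) (sigma i) Hp Rlt_0_1 (Rle_refl _)) as [_ H2].
        intros; apply Hsigma; auto. apply H2. intros; apply Hplus; auto. }
      rewrite (fsum_zero n (fun _ => 0)) in H by (intros; reflexivity). unfold S in Key. lra.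
  - intros Hc x Hsupp Hsgn v Hv [i0 [Hi0 Hne]].
    set (w := fun i => v i - x i).
    assert (Hw : forall i, (i < m)%nat -> matvec A n w i = 0).
    { intros i Hi. unfold w. rewrite matvec_minus, Hv; auto; ring. }
    destruct (HB3 w Hw) as [z Hz].
    assert (Hzn : exists j, (j < k)%nat /\ z j <> 0).
    { apply NNPP; intro Hno. apply Hne.
      assert (w i0 = 0).
      { rewrite Hz; auto. unfold matvec. apply fsum_zero. intros j Hj.
        assert (z j = 0) by (apply NNPP; intro; apply Hno; exists j; auto). rewrite H; ring. }
      unfold w in H; lra. }
    specialize (Hc z Hzn). cbv zeta in Hc. set (Bz := matvec B k z) in Hc.
    destruct Hc as [Hle Hstrict].
    set (S := lpp p n (fun i => negb (T i)) Bz - lpp p n (fun i => (T i && Rltb (Bz i * sigma i) 0)%bool) Bz).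
    assert (E := fsum_decomp n (fun i => if true then rpow (Rabs (v i)) p else 0)
                     (fun i => if true then rpow (Rabs (x i)) p else 0)
                     (fun i => if negb (T i) then rpow (Rabs (Bz i)) p else 0)
                     (fun i => if (T i && Rltb (Bz i * sigma i) 0)%bool then rpow (Rabs (Bz i)) p else 0)).
    unfold lpp in S. fold S in E.
    assert (E2 : fsum n (fun i => (if true then rpow (Rabs (v i)) p else 0) - (if true then rpow (Rabs (x i)) p else 0) -
                ((if negb (T i) then rpow (Rabs (Bz i)) p else 0) - (if (T i && Rltb (Bz i * sigma i) 0)%bool then rpow (Rabs (Bz i)) p else 0)))
              = fsum n (fun i => Dterm p (x i) (Bz i) (T i) (sigma i))).
    { apply fsum_ext; intros i Hi. unfold Dterm. simpl.
      replace (v i) with (x i + Bz i); [reflexivity|].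
      unfold Bz; rewrite <- Hz by auto. unfold w; ring. }
    cbv beta iota in E, E2; rewrite E2 in E. unfold lpp.
    assert (Hterm : forall i, (i < n)%nat -> 0 <= Dterm p (x i) (Bz i) (T i) (sigma i) /\
        ((T i && negb (Rltb (Bz i * sigma i) 0))%bool = true -> Bz i <> 0 -> 0 < Dterm p (x i) (Bz i) (T i) (sigma i))).
    { intros i Hi. apply term_suff; auto.
      intros HF. destruct (Req_dec (x i) 0); auto. apply (Hsupp i Hi) in H. congruence. }
    destruct (classic (forall i, (i < n)%nat -> (T i && negb (Rltb (Bz i * sigma i) 0))%bool = true -> Bz i = 0)) as [Hall|Hex].
    + specialize (Hstrict Hall).
      assert (fsum n (fun _ => 0) <= fsum n (fun i => Dterm p (x i) (Bz i) (T i) (sigma i))).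
      { apply fsum_le; intros; apply Hterm; auto. }
      rewrite (fsum_zero n (fun _ => 0)) in H by (intros; reflexivity). unfold S in E; unfold lpp in Hstrict, Hle; cbv beta iota in *; lra.
    + assert (exists i, (i < n)%nat /\ (T i && negb (Rltb (Bz i * sigma i) 0))%bool = true /\ Bz i <> 0) as [i1 [Hi1 [HT1 HB1']]].
      { apply NNPP; intro Hno. apply Hex. intros i Hi HTi. apply NNPP; intro. apply Hno. exists i; auto. }
      assert (fsum n (fun _ => 0) < fsum n (fun i => Dterm p (x i) (Bz i) (T i) (sigma i))).
      { apply fsum_lt. intros; apply Hterm; auto. exists i1; split; auto. apply Hterm; auto. }
      rewrite (fsum_zero n (fun _ => 0)) in H by (intros; reflexivity). unfold S in E; unfold lpp in Hstrict, Hle; cbv beta iota in *; lra.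
Qed.
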